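(* Let $\{t_n\}$, $\mu_n$, $A$, $B$ and $\{s_n\}$ be as follows: $\{t_n\}_{n\in\mathbb Z}\subset\mathbb R$ increasing with $t_n\to\pm\infty$ as $n\to\pm\infty$; $\mu_n>0$ with $\sum_n\mu_n<\infty$; $A$ entire, real on $\mathbb R$, with only simple zeros, exactly at the $t_n$; $B$ entire defined by $B(z)/A(z)=\sum_n\mu_n/(z-t_n)$; $s_n$ the zero of $B$ in $(t_n,t_{n+1})$. Put $I_n=[t_n,t_{n+1}]$ and assume $|I_k|\asymp|I_n|$ for $n\le k\le 2n$ (constants independent of $k,n$), and that $|t_{an}|\ge\rho|t_n|$ for some $a\ge2$, $\rho>1$ and all $n$. Then for every $\delta>0$ the set of indices $n$ with $t_n>0$ and $t_{n+1}-s_n\ge\delta|I_n|$ has zero density, and likewise the set of indices $n$ with $t_n<0$ and $s_n-t_n\ge\delta|I_n|$ has zero density.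
   Context: A set $\mathcal N$ of integers has zero density if $\operatorname{card}\{n\in\mathcal N:|n|\le R\}/R\to0$ as $R\to\infty$. The notation $U\asymp V$ means $C^{-1}V\le U\le CV$ for a constant $C>0$. *)

(* Defs.v *)
From Stdlib Require Import Reals ZArith List.
Open Scope R_scope.

Definition Cx : Type := (R * R)%type.
Definition Cre (z : Cx) : R := fst z.
Definition Cim (z : Cx) : R := snd z.
Definition RtoC (x : R) : Cx := (x, 0).
Definition C0 : Cx := (0, 0).
Definition Cadd (z w : Cx) : Cx := (fst z + fst w, snd z + snd w).
Definition Csub (z w : Cx) : Cx := (fst z - fst w, snd z - snd w).
Definition Cmul (z w : Cx) : Cx :=
  (fst z * fst w - snd z * snd w, fst z * snd w + snd z * fst w).
Definition Cinv (z : Cx) : Cx :=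
  let d := fst z * fst z + snd z * snd z in (fst z / d, - snd z / d).
Definition Cdiv (z w : Cx) : Cx := Cmul z (Cinv w).
Definition Cnorm (z : Cx) : R := sqrt (fst z * fst z + snd z * snd z).

Definition has_Cderiv (f : Cx -> Cx) (z l : Cx) : Prop :=
  forall eps, 0 < eps -> exists d, 0 < d /\
    forall h, h <> C0 -> Cnorm h < d ->
      Cnorm (Csub (Cdiv (Csub (f (Cadd z h)) (f z)) h) l) < eps.

Definition entire (f : Cx -> Cx) : Prop :=
  forall z, exists l, has_Cderiv f z l.

Definition Zseries (u : Z -> R) (l : R) : Prop :=
  exists l1 l2,
    infinite_sum (fun n => u (Z.of_nat n)) l1 /\
    infinite_sum (fun n => u (- Z.of_nat (S n))%Z) l2 /\
    l = l1 + l2.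

Definition Zseries_C (g : Z -> Cx) (S : Cx) : Prop :=
  Zseries (fun n => Cre (g n)) (Cre S) /\ Zseries (fun n => Cim (g n)) (Cim S).

(* card {n in N : |n| <= R} / R -> 0 as R -> oo, phrased through lists of
   distinct elements (the set is finite, so its cardinality is the maximal
   length of such a list). *)
Definition zero_density (N : Z -> Prop) : Prop :=
  forall eps, 0 < eps -> exists R0, forall (Rr : R) (l : list Z),
    R0 <= Rr -> NoDup l ->
    (forall n, In n l -> N n /\ Rabs (IZR n) <= Rr) ->
    INR (length l) <= eps * Rr.

(* Main.v *)
Require Import Defs.
From Stdlib Require Import Reals ZArith List.
From HB Require Import structures.
From mathcomp Require Import all_boot all_order all_algebra.
From mathcomp.real_closed Require Import polyrcf.
From mathcomp Require ring lra.
From mathcomp Require Import zify.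
From mathcomp Require Import Rstruct.
Set Implicit Arguments. Unset Strict Implicit. Unset Printing Implicit Defensive.
Import Order.TTheory GRing.Theory Num.Theory.

Module BooleM.
Import mathcomp.algebra_tactics.ring mathcomp.algebra_tactics.lra.
Section Boole.
Local Open Scope ring_scope.
Variable R : rcfType.
Variables (m : nat) (a c : nat -> R) (lam : R).
Hypothesis lam_gt0 : 0 < lam.
Hypothesis a_incr : forall i, (i < m)%N -> a i < a i.+1.
Hypothesis c_pos : forall i, (i <= m)%N -> 0 < c i.

Lemma a_lt i j : (i < j)%N -> (j <= m)%N -> a i < a j.
Proof.
elim: j => // j IH; rewrite ltnS leq_eqVlt => /orP[/eqP->|hij] hj; first exact: a_incr.
exact: lt_trans (IH hij (ltnW hj)) (a_incr hj).
Qed.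

Lemma a_le i j : (i <= j)%N -> (j <= m)%N -> a i <= a j.
Proof. rewrite leq_eqVlt => /orP[/eqP->|h] hj //; exact/ltW/a_lt. Qed.

Lemma ord_le (j : 'I_m.+1) : (j <= m)%N. Proof. by have := ltn_ord j; rewrite ltnS. Qed.
Lemma c_posj (j : 'I_m.+1) : 0 < c j. Proof. exact: c_pos (ord_le j). Qed.

Definition P := \prod_(j < m.+1) ('X - (a j)%:P).
Definition Pi (i : 'I_m.+1) := \prod_(j < m.+1 | j != i) ('X - (a j)%:P).
Definition Q := lam *: P + \sum_(i < m.+1) c i *: Pi i.

Lemma hornerQ x : Q.[x] = lam * \prod_(j < m.+1) (x - a j)
   + \sum_(i < m.+1) c i * \prod_(j < m.+1 | j != i) (x - a j).
Proof.
rewrite /Q hornerD hornerZ horner_sum /P horner_prod; congr (_ * _ + _).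
  by apply: eq_bigr => j _; rewrite hornerXsubC.
apply: eq_bigr => i _; rewrite hornerZ /Pi horner_prod; congr (_ * _).
by apply: eq_bigr => j _; rewrite hornerXsubC.
Qed.

Lemma QatA (k : 'I_m.+1) : Q.[a k] = c k * \prod_(j < m.+1 | j != k) (a k - a j).
Proof.
rewrite hornerQ (bigD1 k) //= subrr mul0r mulr0 add0r (bigD1 k) //=.
rewrite [X in _ + X]big1 ?addr0 //.
move=> i /negbTE hik; rewrite (bigD1 k) /=; last by rewrite eq_sym hik.
by rewrite subrr mul0r mulr0.
Qed.

Lemma QatX x (hx : forall j : 'I_m.+1, x != a j) :
  Q.[x] = \prod_(j < m.+1) (x - a j) * (lam + \sum_(i < m.+1) c i / (x - a i)).
Proof.
rewrite hornerQ mulrDr mulrC; congr (_ + _).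
rewrite mulr_sumr; apply: eq_bigr => i _.
have hi : x - a i != 0 by rewrite subr_eq0.
rewrite [in RHS](bigD1 i) //=; field; exact: hi.
Qed.

Lemma Qgap (i i' : 'I_m.+1) : nat_of_ord i' = (nat_of_ord i).+1 -> Q.[a i] * Q.[a i'] < 0.
Proof.
move=> hii'.
have ne : i' != i by apply/eqP => e; rewrite e in hii'; lia.
have ne' : i != i' by rewrite eq_sym.
rewrite !QatA (bigD1 i') //= [X in _ * (_ * X)](bigD1 i) //=.
rewrite mulrACA [X in _ * X]mulrACA.
set p1 := \prod_(j < m.+1 | _) _.
set p2 := \prod_(j < m.+1 | _) _.
have hp : 0 < p1 * p2.
  rewrite /p1 /p2 [X in _ * X](eq_bigl (fun j => (j != i) && (j != i'))); last first.
    by move=> j; rewrite andbC.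
  rewrite -big_split /=; apply: prodr_gt0 => j /andP[hj1 hj2].
  have hjm := ltn_ord j.
  have hi'm := ltn_ord i'.
  have [hlt|hgt] : (nat_of_ord j < i)%N \/ (nat_of_ord i' < j)%N.
    move: hj1 hj2 hii'; rewrite -!(inj_eq (@ord_inj _)) /=.
    move: (nat_of_ord i) (nat_of_ord i') (nat_of_ord j) => x y z; lia.
  - apply: mulr_gt0; rewrite subr_gt0; apply: a_lt => //; try lia.
    rewrite nmulr_rgt0; rewrite subr_lt0; apply: a_lt => //; try lia.
have hd : (a i - a i') * (a i' - a i) < 0.
  have h : a i < a i' by apply: a_lt; have := ltn_ord i'; lia.
  rewrite pmulr_llt0 ?subr_gt0 // subr_lt0 //.
have hc : 0 < c i * c i'.
  by apply: mulr_gt0; apply: c_pos; [have := ltn_ord i|have := ltn_ord i']; lia.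
by rewrite pmulr_rlt0 // pmulr_llt0.
Qed.

Lemma divdiff (u v w : R) : u != 0 -> v != 0 -> w/u - w/v = w*(v-u)/(u*v).
Proof. by move=> hu hv; field; apply/andP; split. Qed.

Definition x0 := a 0 - (\sum_(i < m.+1) c i) / lam - 1.

Lemma x0_lt (j : 'I_m.+1) : x0 < a j.
Proof.
have hS : 0 <= (\sum_(i < m.+1) c i) / lam.
  apply: divr_ge0; last exact: ltW.
  by apply: sumr_ge0 => i _; apply/ltW; exact: c_posj.
apply: lt_le_trans (_ : a 0 <= a j); last by apply: a_le => //; have := ltn_ord j; lia.
rewrite /x0; lra.
Qed.

Lemma Qleft : Q.[x0] * Q.[a (@ord0 m)] < 0.
Proof.
have hx : forall j : 'I_m.+1, x0 != a j by move=> j; rewrite lt_eqF // x0_lt.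
rewrite QatX // QatA (bigD1 ord0) //= mulrACA -mulrA.
set p1 := \prod_(j < m.+1 | _) _.
set p2 := \prod_(j < m.+1 | _) _.
set L := lam + _.
have hp : 0 < p1 * p2.
  rewrite /p1 /p2 -big_split /=; apply: prodr_gt0 => j hj.
  have h0 : a 0 < a j.
    apply: a_lt; last by have := ltn_ord j; lia.
    by move: hj; rewrite -(inj_eq (@ord_inj _)) /=; lia.
  rewrite nmulr_rgt0 ?subr_lt0 ?x0_lt //.
set S := \sum_(i < m.+1) c i.
have hS : 0 < S.
  rewrite /S big_ord_recl /=; apply: ltr_wpDr; last exact: c_pos.
  by apply: sumr_ge0 => i _; apply/ltW; exact: (c_posj (lift ord0 i)).
have hL : 0 < L.
  have e : x0 - a 0 = - (S / lam + 1) by rewrite /x0 /S; ring.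
  have hneg : x0 - a 0 < 0 by rewrite e oppr_lt0; apply: ltr_wpDl; [apply: divr_ge0; apply: ltW|].
  have h1 : S / (x0 - a 0) <= \sum_(i < m.+1) c i / (x0 - a i).
    rewrite /S mulr_suml; apply: ler_sum => i _.
    have hi0 : x0 - a i < 0 by rewrite subr_lt0 x0_lt.
    rewrite -subr_ge0 divdiff ?lt_eqF //.
    apply: divr_ge0; first apply: mulr_ge0.
    - by apply/ltW; exact: c_posj.
    - rewrite subr_ge0 lerD2l lerN2; apply: a_le => //; have := ltn_ord i; lia.
    - by apply/ltW; rewrite nmulr_rgt0.
  have h2 : - lam < S / (x0 - a 0).
    rewrite ltr_ndivlMr // e mulrNN.
    have -> : lam * (S / lam + 1) = S + lam by field; rewrite lt0r_neq0.
    by rewrite ltrDl.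
  rewrite /L; lra.
have hc0 : 0 < c 0 by apply: c_pos.
have hx0 : x0 - a 0 < 0 by rewrite subr_lt0 (x0_lt ord0).
have -> : (x0 - a 0) * p1 * (c 0 * (L * p2)) = ((x0 - a 0) * (c 0 * L)) * (p1 * p2) by ring.
rewrite pmulr_llt0 // pmulr_llt0 //; exact: mulr_gt0.
Qed.

Lemma sz_ie n : size (index_enum 'I_n) = n.
Proof. by rewrite -[index_enum _]enumT size_enum_ord. Qed.

Lemma size_P : size P = m.+2.
Proof. by rewrite /P size_prod_XsubC sz_ie. Qed.

Lemma P_decomp (i : 'I_m.+1) : P = ('X - (a i)%:P) * Pi i.
Proof. by rewrite /P (bigD1 i). Qed.

Lemma size_Pi (i : 'I_m.+1) : size (Pi i) = m.+1.
Proof.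
have := size_P; rewrite (P_decomp i) size_monicM ?monicXsubC ?monic_neq0 ?monic_prod_XsubC //.
by rewrite size_XsubC add2n /= => [[]].
Qed.

Lemma Pi_coef_m (i : 'I_m.+1) : (Pi i)`_m = 1.
Proof.
have := lead_coef_prod_XsubC (index_enum 'I_m.+1) (fun j => j != i) (fun j => a j).
by rewrite lead_coefE size_Pi.
Qed.

Lemma Pi_coef_Sm (i : 'I_m.+1) : (Pi i)`_m.+1 = 0.
Proof. by apply: nth_default; rewrite size_Pi. Qed.

Lemma P_coef_Sm : P`_m.+1 = 1.
Proof.
have := lead_coef_prod_XsubC (index_enum 'I_m.+1) xpredT (fun j => a j).
by rewrite lead_coefE -/P size_P.
Qed.

Lemma P_coef_m : P`_m = - \sum_(j < m.+1) a j.
Proof.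
rewrite /P -(big_map (fun j : 'I_m.+1 => a j) xpredT (fun z => 'X - z%:P)).
have hs : size [seq a j | j : 'I_m.+1 <- index_enum 'I_m.+1] = m.+1.
  by rewrite size_map sz_ie.
have := @coefPn_prod_XsubC _ [seq a j | j : 'I_m.+1 <- index_enum 'I_m.+1].
rewrite hs /= => ->//.
by rewrite big_map.
Qed.

Lemma Q_coef_Sm : Q`_m.+1 = lam.
Proof.
rewrite /Q coefD coefZ P_coef_Sm mulr1 coef_sum big1 ?addr0 //.
by move=> i _; rewrite coefZ Pi_coef_Sm mulr0.
Qed.

Lemma Q_coef_m : Q`_m = lam * (- \sum_(j < m.+1) a j) + \sum_(i < m.+1) c i.
Proof.
rewrite /Q coefD coefZ P_coef_m coef_sum; congr (_ + _).
by apply: eq_bigr => i _; rewrite coefZ Pi_coef_m mulr1.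
Qed.

Lemma size_Q : size Q = m.+2.
Proof.
apply/eqP; rewrite eqn_leq; apply/andP; split.
  rewrite /Q; apply: leq_trans (size_polyD _ _) _; rewrite geq_max.
  rewrite (leq_trans (size_scale_leq _ _)) ?size_P //.
  apply: leq_trans (size_sum _ _ _) _; apply/bigmax_leqP => i _.
  by rewrite (leq_trans (size_scale_leq _ _)) // size_Pi.
rewrite ltnNge; apply/negP => /leq_sizeP /(_ m.+1 (leqnn _)).
by rewrite Q_coef_Sm => h; move: lam_gt0; rewrite h ltxx.
Qed.

Lemma lead_Q : lead_coef Q = lam.
Proof. by rewrite lead_coefE size_Q Q_coef_Sm. Qed.

Lemma gap_root' k : exists x, ((k < m)%N ==> ((a k < x < a k.+1) && root Q x)).
Proof.
case hk: (k < m)%N; last by exists 0.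
have hk1 : (k < m.+1)%N by lia.
have hk2 : (k.+1 < m.+1)%N by lia.
have := poly_ivtoo (ltW (a_incr hk)) (@Qgap (Ordinal hk1) (Ordinal hk2) erefl).
case => x; rewrite in_itv /= => hx hr; exists x; by rewrite hx hr.
Qed.

Lemma left_root' : exists x, (x < a 0) && root Q x.
Proof.
have := poly_ivtoo (ltW (x0_lt ord0)) Qleft.
case => x; rewrite in_itv /= => /andP[_ hx] hr; exists x; by rewrite hx hr.
Qed.

Definition r k := xchoose (gap_root' k).
Definition rho := xchoose left_root'.

Lemma rP k : (k < m)%N -> a k < r k < a k.+1 /\ root Q (r k).
Proof. by move=> hk; have /implyP /(_ hk) /andP[] := xchooseP (gap_root' k). Qed.

Lemma rhoP : rho < a 0 /\ root Q rho.
Proof. by have := xchooseP left_root'; case/andP. Qed.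

Definition rs := rho :: [seq r k | k <- iota 0 m].

Lemma rs_uniq : uniq rs.
Proof.
rewrite /rs /= ; apply/andP; split.
  apply/negP => /mapP [k]; rewrite mem_iota add0n => /andP[_ hk] e.
  have [h1 _] := rP hk; have [h2 _] := rhoP.
  have h3 : a 0 <= a k by apply: a_le => //; lia.
  move: h1 => /andP[h1 _]; rewrite -e in h1.
  by move: (lt_trans (le_lt_trans h3 h1) h2); rewrite ltxx.
rewrite map_inj_in_uniq ?iota_uniq //.
move=> i j; rewrite !mem_iota !add0n => /andP[_ hi] /andP[_ hj] e.
apply/eqP; case: (ltngtP i j) => // h; exfalso.
- have [/andP[_ h1] _] := rP hi; have [/andP[h2 _] _] := rP hj.
  have h3 : a i.+1 <= a j by apply: a_le; lia.
  by move: (lt_trans h1 (le_lt_trans h3 h2)); rewrite e ltxx.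
- have [/andP[_ h1] _] := rP hj; have [/andP[h2 _] _] := rP hi.
  have h3 : a j.+1 <= a i by apply: a_le; lia.
  by move: (lt_trans h1 (le_lt_trans h3 h2)); rewrite e ltxx.
Qed.

Lemma Q_factor : Q = lam *: \prod_(z <- rs) ('X - z%:P).
Proof.
rewrite -[in RHS]lead_Q; apply: all_roots_prod_XsubC.
- by rewrite size_Q /rs /= size_map size_iota.
- rewrite /rs /= rhoP.2 /=; apply/allP => z /mapP [k]; rewrite mem_iota add0n => /andP[_ hk] ->.
  exact: (rP hk).2.
- by rewrite uniq_rootsE rs_uniq.
Qed.

Lemma boole_identity :
  \sum_(k < m) (a k.+1 - r k) + (a 0 - rho) = (\sum_(i < m.+1) c i) / lam.
Proof.
have h := Q_coef_m; rewrite Q_factor coefZ in h.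
have hs : (size rs).-1 = m by rewrite /rs /= size_map size_iota.
rewrite -{1}hs coefPn_prod_XsubC ?hs // in h.
move: h; rewrite /rs big_cons big_map big_ord_recl /=.
rewrite -(big_mkord xpredT (fun k => a k.+1)) /index_iota subn0 => h.
have -> : \sum_(k < m) (a k.+1 - r k) = \sum_(k <- iota 0 m) a k.+1 - \sum_(k <- iota 0 m) r k.
  have e1 : forall F : nat -> R, \sum_(k <- iota 0 m) F k = \sum_(k < m) F k.
    by move=> F; rewrite -(big_mkord xpredT) /index_iota subn0.
  by rewrite !e1 sumrB.
have e : \sum_(i < m.+1) c i = lam * (- (rho + \sum_(k <- iota 0 m) r k)) - lam * (- (a 0 + \sum_(k <- iota 0 m) a k.+1)).
  rewrite h; ring.
rewrite e; field; exact: lt0r_neq0.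
Qed.

Definition g x := \sum_(i < m.+1) c i / (x - a i).

Lemma same_side k (j : 'I_m.+1) y z : (k < m)%N -> a k < y < a k.+1 -> a k < z < a k.+1 ->
  0 < (y - a j) * (z - a j).
Proof.
move=> hk /andP[hy1 hy2] /andP[hz1 hz2].
have hj := ord_le j.
case: (leqP (nat_of_ord j) k) => hjk.
  have h : a j <= a k by apply: a_le => //; lia.
  by apply: mulr_gt0; rewrite subr_gt0; apply: le_lt_trans h _.
have h : a k.+1 <= a j by apply: a_le.
rewrite nmulr_rgt0 subr_lt0; first exact: lt_le_trans hz2 h.
exact: lt_le_trans hy2 h.
Qed.

Lemma r_neq k (j : 'I_m.+1) : (k < m)%N -> r k != a j.
Proof.
move=> hk; have [hr _] := rP hk.
have := same_side j hk hr hr; apply: contraTneq => ->.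
by rewrite subrr mul0r ltxx.
Qed.

Lemma r_eq k : (k < m)%N -> lam + g (r k) = 0.
Proof.
move=> hk; have [_ hroot] := rP hk.
move: hroot; rewrite /root QatX; last by move=> j; exact: r_neq.
rewrite mulf_eq0 => /orP[|/eqP //].
rewrite prodf_seq_eq0 => /hasP [j _ /=]; rewrite subr_eq0 => /eqP e.
by move: (r_neq j hk); rewrite e eqxx.
Qed.

Lemma r_min k x : (k < m)%N -> a k < x < a k.+1 -> lam + g x <= 0 -> r k <= x.
Proof.
move=> hk hx hgx; case: (leP (r k) x) => // hlt; exfalso.
have [hr _] := rP hk.
have hg : g (r k) < g x.
  rewrite /g; apply: ltr_sum.
    by apply/hasP; exists ord0 => //; exact: mem_index_enum.
  move=> j _; rewrite -subr_gt0.
  have hs := same_side j hk hx hr.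
  rewrite divdiff; last by apply/negP => /eqP e; move: hs; rewrite e ?mulr0 ?mul0r ltxx.
    apply: divr_gt0 => //; apply: mulr_gt0; first exact: c_posj.
    by rewrite opprB addrA subrK subr_gt0.
  by apply/negP => /eqP e; move: hs; rewrite e ?mulr0 ?mul0r ltxx.
have := r_eq hk; lra.
Qed.

Theorem boole_ineq : exists r : nat -> R,
  (forall k, (k < m)%N -> a k < r k < a k.+1 /\
     (forall x, a k < x < a k.+1 -> lam + \sum_(i < m.+1) c i / (x - a i) <= 0 -> r k <= x)) /\
  \sum_(k < m) (a k.+1 - r k) <= (\sum_(i < m.+1) c i) / lam.
Proof.
exists r; split.
  move=> k hk; split; first exact: (rP hk).1.
  by move=> x hx; apply: r_min.
rewrite -boole_identity lerDl subr_ge0; exact/ltW/rhoP.1.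
Qed.

End Boole.
End BooleM.
Import BooleM.


From Stdlib Require Import Reals.
Fixpoint sumR (f : nat -> R) (n : nat) : R :=
  match n with O => IZR Z0 | S k => Rplus (sumR f k) (f k) end.

Section Bridge.
Local Open Scope ring_scope.
Lemma big_sumR (F : nat -> R) n : \sum_(i < n) F i = sumR F n.
Proof.
elim: n => [|n IH]; first by rewrite big_ord0.
by rewrite big_ord_recr /= IH.
Qed.

Lemma boole_R (m : nat) (a c : nat -> R) (lam : R) :
  Rlt 0 lam -> (forall i, leq (S i) m -> Rlt (a i) (a (S i))) -> (forall i, leq i m -> Rlt 0 (c i)) ->
  exists r : nat -> R,
   (forall k, leq (S k) m -> (Rlt (a k) (r k) /\ Rlt (r k) (a (S k))) /\
      (forall x, Rlt (a k) x -> Rlt x (a (S k)) ->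
          Rle (Rplus lam (sumR (fun i => Rdiv (c i) (Rminus x (a i))) (S m))) 0 -> Rle (r k) x)) /\
   Rle (sumR (fun k => Rminus (a (S k)) (r k)) m) (Rdiv (sumR c (S m)) lam).
Proof.
move=> hl ha hc.
have hl' : 0 < lam by apply/RltP.
have ha' : forall i, leq (S i) m -> a i < a i.+1 by move=> i hi; apply/RltP; exact: ha.
have hc' : forall i, leq i m -> 0 < c i by move=> i hi; apply/RltP; exact: hc.
have [r [h1 h2]] := boole_ineq hl' ha' hc'.
exists r; split.
  move=> k hk; have [/andP[/RltP p1 /RltP p2] p3] := h1 k hk; split; first by split.
  move=> x hx1 hx2 hg; apply/RleP; apply: p3.
    by apply/andP; split; apply/RltP.
  by rewrite (big_sumR (fun i => c i / (x - a i))); apply/RleP.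
by rewrite (big_sumR (fun k => a k.+1 - r k)) (big_sumR c) in h2; apply/RleP.
Qed.
End Bridge.

Unset Implicit Arguments.
Set Strict Implicit.
From Stdlib Require Import Reals Lra Lia ZArith List ClassicalEpsilon FunctionalExtensionality.
Open Scope R_scope.


Lemma sumR_f_R0 f n : sumR f (S n) = sum_f_R0 f n.
Proof.
induction n as [|n IH]; [simpl; ring|].
change (sumR f (S (S n))) with (sumR f (S n) + f (S n)); rewrite IH; reflexivity.
Qed.

Lemma sumR_S f n : sumR f (S n) = sumR f n + f n.
Proof. reflexivity. Qed.

Lemma sumR_split f a b : sumR f (a + b) = sumR f a + sumR (fun i => f (a + i)%nat) b.
Proof.
induction b as [|b IH]; simpl.
- rewrite addn0; lra.
- rewrite addnS; simpl; rewrite IH; lra.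
Qed.

Lemma sumR_le f g n : (forall i, (i < n)%nat -> f i <= g i) -> sumR f n <= sumR g n.
Proof.
induction n as [|n IH]; simpl; intros H; [lra|].
assert (f n <= g n) by (apply H; lia).
assert (sumR f n <= sumR g n) by (apply IH; intros; apply H; lia). lra.
Qed.

Lemma sumR_nonneg f n : (forall i, (i < n)%nat -> 0 <= f i) -> 0 <= sumR f n.
Proof.
intros H; assert (sumR (fun _ => 0) n = 0).
{ induction n; simpl; [lra| rewrite IHn; [lra|intros; apply H; lia]]. }
rewrite <- H0; apply sumR_le; auto.
Qed.

Lemma sumR_const0 n : sumR (fun _ => 0) n = 0.
Proof. induction n; simpl; [lra| rewrite IHn; lra]. Qed.

Lemma sumR_mono f a b : (forall i, 0 <= f i) -> (a <= b)%nat -> sumR f a <= sumR f b.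
Proof.
intros H hab; replace b with (a + (b - a))%nat by lia.
rewrite sumR_split; assert (0 <= sumR (fun i => f (a + i)%nat) (b - a)) by (apply sumR_nonneg; auto); lra.
Qed.

Lemma sumR_scal f k n : sumR (fun i => k * f i) n = k * sumR f n.
Proof. induction n; simpl; [ring| rewrite IHn; ring]. Qed.

Lemma sumR_scal_r f k n : sumR (fun i => f i * k) n = sumR f n * k.
Proof. induction n; simpl; [ring| rewrite IHn; ring]. Qed.

Lemma sumR_plus f g n : sumR (fun i => f i + g i) n = sumR f n + sumR g n.
Proof. induction n; simpl; [ring| rewrite IHn; ring]. Qed.

Lemma sumR_ext f g n : (forall i, (i < n)%nat -> f i = g i) -> sumR f n = sumR g n.
Proof.
induction n; simpl; intros H; [reflexivity|].
rewrite IHn; [rewrite H; [reflexivity|lia]| intros; apply H; lia].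
Qed.

Lemma inf_sum_ge f l b N0 : infinite_sum f l -> (forall N, (N0 <= N)%nat -> b <= sumR f N) -> b <= l.
Proof.
intros Hs H.
destruct (Rle_or_lt b l) as [h|h]; [exact h|exfalso].
destruct (Hs (b - l)) as [N HN]; [lra|].
specialize (HN (N + N0)%nat ltac:(lia)).
specialize (H (S (N + N0)) ltac:(lia)).
rewrite sumR_f_R0 in H. unfold R_dist in HN.
apply Rabs_def2 in HN. lra.
Qed.

Lemma inf_sum_le f l b N0 : infinite_sum f l -> (forall N, (N0 <= N)%nat -> sumR f N <= b) -> l <= b.
Proof.
intros Hs H.
destruct (Rle_or_lt l b) as [h|h]; [exact h|exfalso].
destruct (Hs (l - b)) as [N HN]; [lra|].
specialize (HN (N + N0)%nat ltac:(lia)).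
specialize (H (S (N + N0)) ltac:(lia)).
rewrite sumR_f_R0 in H. unfold R_dist in HN.
apply Rabs_def2 in HN. lra.
Qed.

Lemma inf_sum_partial_le f l n : (forall i, 0 <= f i) -> infinite_sum f l -> sumR f n <= l.
Proof.
intros Hf Hs. apply (inf_sum_ge f l (sumR f n) n Hs).
intros N HN; apply sumR_mono; auto.
Qed.

Section Core.
Variables (tt ss mu : nat -> R).
Hypothesis H1 : forall n, tt n < tt (S n).
Hypothesis H2 : tt 0%nat = 0.
Hypothesis H3 : forall M, exists n, M < tt n.
Hypothesis H4 : forall k, 0 < mu k.
Variable L : R.
Hypothesis H5 : infinite_sum mu L.
Hypothesis H6 : forall n, exists l, infinite_sum (fun k => mu k / (ss n - tt k)) l /\ l <= 0.
Hypothesis H7 : forall n, tt n < ss n < tt (S n).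

Lemma tt_lt i j : (i < j)%nat -> tt i < tt j.
Proof.
intros h; induction j as [|j IH]; [lia|].
destruct (Nat.eq_dec i j) as [->|hne]; [apply H1|].
assert (tt i < tt j) by (apply IH; lia). specialize (H1 j); lra.
Qed.

Lemma tt_le i j : (i <= j)%nat -> tt i <= tt j.
Proof.
intros h; destruct (Nat.eq_dec i j) as [->|hne]; [lra|].
left; apply tt_lt; lia.
Qed.

Lemma tt_nonneg n : 0 <= tt n.
Proof. rewrite <- H2; apply tt_le; lia. Qed.

Lemma tt_pos n : (0 < n)%nat -> 0 < tt n.
Proof. intros h; rewrite <- H2; apply tt_lt; lia. Qed.

Lemma ss_pos n : 0 < ss n.
Proof. destruct (H7 n); pose proof (tt_nonneg n); lra. Qed.

Lemma mu_partial_le n : sumR mu n <= L.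
Proof. apply inf_sum_partial_le; auto. intros; left; auto. Qed.

Lemma balance n K : (n <= K)%nat ->
  sumR (fun k => mu k / (ss n - tt k)) (S K) <= (L - sumR mu (S K)) / (tt (S K) - ss n).
Proof.
intros hnK.
set D := tt (S K) - ss n.
assert (hD : 0 < D).
{ unfold D; destruct (H7 n); pose proof (tt_le (S n) (S K) ltac:(lia)); lra. }
destruct (H6 n) as [l [hl hl0]].
set term := fun k => mu k / (ss n - tt k).
assert (claim : forall d, sumR term (S K) - (sumR mu (S K + d) - sumR mu (S K)) / D <= sumR term (S K + d)).
{ induction d as [|d IH].
  - rewrite addn0; unfold Rdiv; rewrite Rminus_diag Rmult_0_l; lra.
  - rewrite addnS (sumR_S term (S K + d)) (sumR_S mu (S K + d)).
    assert (ht : - (mu (S K + d)%nat / D) <= term (S K + d)%nat).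
    { unfold term. pose proof (tt_le (S K) (S K + d) ltac:(lia)).
      pose proof (H4 (S K + d)%nat).
      assert (he2 : D <= tt (S K + d)%nat - ss n) by (unfold D; lra).
      assert (he3 : 0 < tt (S K + d)%nat - ss n) by lra.
      set e := tt (S K + d)%nat - ss n.
      assert (he : D <= e) by (unfold e; lra).
      replace (mu (S K + d)%nat / (ss n - tt (S K + d)%nat)) with (- (mu (S K + d)%nat / e)) by (unfold e; field; lra).
      assert (mu (S K + d)%nat / e <= mu (S K + d)%nat / D).
      { unfold Rdiv; apply Rmult_le_compat_l; [lra| apply Rinv_le_contravar; lra]. }
      lra. }
    replace ((sumR mu (S K + d) + mu (S K + d)%nat - sumR mu (S K)) / D) with
      ((sumR mu (S K + d) - sumR mu (S K)) / D + mu (S K + d)%nat / D) by (field; lra).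
    lra. }
assert (hl2 : sumR term (S K) - (L - sumR mu (S K)) / D <= l).
{ apply (inf_sum_ge term l _ (S K) hl).
  intros N hN. replace N with (S K + (N - S K))%nat by lia.
  eapply Rle_trans; [|apply claim].
  pose proof (mu_partial_le (S K + (N - S K))).
  unfold Rdiv; apply Rplus_le_compat_l, Ropp_le_contravar, Rmult_le_compat_r; [left; apply Rinv_0_lt_compat; lra| lra]. }
fold term; lra.
Qed.

Definition II n := tt (S n) - tt n.
Lemma II_pos n : 0 < II n.
Proof. unfold II; specialize (H1 n); lra. Qed.

Variables (Kc rho : R) (a0 : nat).
Hypothesis H8 : forall n k, (n <= k)%nat -> (k <= 2 * n)%nat -> II k <= Kc * II n /\ II n <= Kc * II k.
Hypothesis Ha0 : (2 <= a0)%nat.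
Hypothesis Hrho : 1 < rho.
Hypothesis H9 : forall n, rho * tt n <= tt (a0 * n).

Lemma Kc_ge1 : 1 <= Kc.
Proof.
destruct (H8 0 0 ltac:(lia) ltac:(lia)) as [h _].
pose proof (II_pos 0).
destruct (Rle_or_lt 1 Kc) as [|hk]; [assumption|].
assert (Kc * II 0 < 1 * II 0) by (apply Rmult_lt_compat_r; lra). lra.
Qed.

Lemma L_pow j N n : (N <= n)%nat -> (n <= expn 2 j * N)%nat -> II n <= Kc ^ j * II N.
Proof.
revert n; induction j as [|j IH]; intros n h1 h2.
- rewrite expn0 mul1n in h2. replace n with N by lia. simpl; lra.
- pose proof Kc_ge1. pose proof (II_pos N).
  assert (hKj : 1 <= Kc ^ j) by (apply pow_R1_Rle; lra).
  destruct (leqP n (expn 2 j * N)) as [hle|hgt].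
  + eapply Rle_trans; [apply IH; auto|].
    simpl. assert (Kc ^ j * II N <= Kc * (Kc ^ j * II N)).
    { rewrite <- (Rmult_1_l (Kc ^ j * II N)) at 1. apply Rmult_le_compat_r; [|lra].
      apply Rmult_le_pos; lra. }
    lra.
  + rewrite expnS in h2.
    destruct (H8 (expn 2 j * N) n ltac:(lia) ltac:(lia)) as [hA _].
    assert (hpos : (0 < expn 2 j)%nat) by (rewrite expn_gt0; lia).
    assert (hNle : (N <= expn 2 j * N)%nat) by (apply leq_pmull; exact hpos).
    assert (hB : II (expn 2 j * N) <= Kc ^ j * II N) by (apply IH; lia).
    simpl. eapply Rle_trans; [apply hA|].
    rewrite Rmult_assoc. apply Rmult_le_compat_l; lra.
Qed.

Lemma sumI N d B : (forall i, (i < d)%nat -> II (N + i) <= B) -> tt (N + d) - tt N <= INR d * B.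
Proof.
induction d as [|d IH]; intros h.
- rewrite addn0; simpl; lra.
- rewrite addnS S_INR.
  assert (h1 : tt (N + d) - tt N <= INR d * B) by (apply IH; intros; apply h; lia).
  assert (h2 : II (N + d) <= B) by (apply h; lia).
  unfold II in h2. lra.
Qed.

Lemma INR_muln m n : INR (m * n)%nat = INR m * INR n.
Proof. rewrite -multE; apply mult_INR. Qed.

Definition Cst := INR a0 * Kc ^ a0 / (rho - 1) + Kc.

Lemma tt_bound N : tt (2 * N) <= Cst * INR N * II N.
Proof.
pose proof Kc_ge1. pose proof (II_pos N).
assert (hKa : 1 <= Kc ^ a0) by (apply pow_R1_Rle; lra).
assert (ha2 : (a0 <= expn 2 a0)%nat) by (apply ltnW; apply ltn_expl; lia).
assert (hNa : (N <= a0 * N)%nat) by (apply leq_pmull; lia).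
assert (hA : tt (N + (a0 * N - N)) - tt N <= INR (a0 * N - N) * (Kc ^ a0 * II N)).
{ apply sumI. intros i hi. apply L_pow; [lia|].
  apply (leq_trans (n := (a0 * N)%nat)); [lia|]. apply leq_mul; [exact ha2| apply leqnn]. }
replace (N + (a0 * N - N))%nat with (a0 * N)%nat in hA by lia.
assert (hB : INR (a0 * N - N) <= INR a0 * INR N).
{ rewrite -INR_muln; apply le_INR; lia. }
assert (hC : (rho - 1) * tt N <= tt (a0 * N) - tt N) by (specialize (H9 N); lra).
assert (hD : tt (N + N) - tt N <= INR N * (Kc * II N)).
{ apply sumI. intros i hi. destruct (H8 N (N + i) ltac:(lia) ltac:(lia)) as [h _]. exact h. }
replace (N + N)%nat with (2 * N)%nat in hD by lia.
assert (hE : tt (a0 * N) - tt N <= INR a0 * INR N * (Kc ^ a0 * II N)).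
{ eapply Rle_trans; [exact hA|]. apply Rmult_le_compat_r; [|exact hB].
  apply Rmult_le_pos; lra. }
assert (hF : tt N <= INR a0 * INR N * (Kc ^ a0 * II N) / (rho - 1)).
{ apply (Rmult_le_reg_l (rho - 1)); [lra|]. field_simplify; lra. }
unfold Cst.
assert (e : (INR a0 * Kc ^ a0 / (rho - 1) + Kc) * INR N * II N =
            INR a0 * INR N * (Kc ^ a0 * II N) / (rho - 1) + INR N * (Kc * II N)) by (field; lra).
rewrite e. lra.
Qed.

Variable delta : R.
Hypothesis Hdelta : 0 < delta.
Definition bad n := delta * II n <= tt (S n) - ss n.
Definition ind n : R := if excluded_middle_informative (bad n) then 1 else 0.

Lemma ind_01 n : ind n = 0 \/ (ind n = 1 /\ bad n).
Proof. unfold ind; destruct (excluded_middle_informative (bad n)); auto. Qed.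

Lemma ind_nonneg n : 0 <= ind n.
Proof. destruct (ind_01 n) as [->|[-> _]]; lra. Qed.

Lemma L_pos : 0 < L.
Proof.
pose proof (mu_partial_le 1). simpl in H. pose proof (H4 0). lra.
Qed.

Lemma block N0 eta N : (1 <= N0)%nat -> (N0 <= N)%nat -> L - sumR mu N0 <= eta ->
  sumR (fun i => ind (N + i)) N * (delta * II N / Kc) <= 2 * eta * tt (2 * N) / mu 0%nat.
Proof.
intros hN0 hN0N heta.
set T := tt (2 * N).
assert (hT : 0 < T) by (apply tt_pos; lia).
pose proof (H4 0) as hmu0.
pose proof L_pos as hL.
set lam := mu 0%nat / (2 * T).
assert (hlam : 0 < lam) by (unfold lam; apply Rdiv_lt_0_compat; lra).
destruct (H3 (T + 2 * L * T / mu 0%nat + 1)) as [n1 hn1].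
set K := maxn n1 (2 * N).
assert (hK1 : (n1 <= S K)%nat) by (unfold K; lia).
assert (hK2 : (2 * N <= K)%nat) by (unfold K; lia).
assert (hTK : T + 2 * L * T / mu 0%nat + 1 < tt (S K)).
{ eapply Rlt_le_trans; [exact hn1| apply tt_le; exact hK1]. }
set m := (K - N0)%nat.
set a := fun i => tt (N0 + i)%nat.
set c := fun i => mu (N0 + i)%nat.
assert (ha : forall i, (i < m)%nat -> a i < a (S i)).
{ intros i _; unfold a; rewrite addnS; apply H1. }
assert (hc : forall i, (i <= m)%nat -> 0 < c i) by (intros; apply H4).
destruct (boole_R hlam ha hc) as [r [hr hsum]].
assert (hmK : (2 * N - N0 <= m)%nat) by (unfold m; lia).
assert (hkey : forall i', (i' < N)%nat ->
   tt (S (N + i')%nat) - ss (N + i')%nat <= a (S (N - N0 + i')%nat) - r (N - N0 + i')%nat).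
{ intros i' hi'.
  set n := (N + i')%nat.
  set i := (N - N0 + i')%nat.
  assert (hi : (i < m)%nat) by (unfold i, m; lia).
  assert (hai : a i = tt n) by (unfold a, i, n; f_equal; lia).
  assert (haSi : a (S i) = tt (S n)) by (unfold a, i, n; f_equal; lia).
  destruct (hr i hi) as [[hr1 hr2] hmin].
  destruct (H7 n) as [hs1 hs2].
  assert (hsT : ss n <= T) by (unfold T; pose proof (tt_le (S n) (2 * N) ltac:(unfold n; lia)); lra).
  pose proof (ss_pos n) as hsp.
  set term := fun k => mu k / (ss n - tt k).
  assert (hsplit : sumR term (S K) = sumR term N0 + sumR (fun j => c j / (ss n - a j)) (S m)).
  { replace (S K) with (N0 + S m)%nat by (unfold m; lia). rewrite sumR_split. reflexivity. }
  assert (hbal : sumR term (S K) <= mu 0%nat / (2 * T)).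
  { eapply Rle_trans; [apply balance; unfold n; lia|].
    pose proof (mu_partial_le (S K)).
    set X := L - sumR mu (S K).
    set Y := tt (S K) - ss n.
    assert (hZ : 0 < 2 * L * T / mu 0%nat) by (apply Rdiv_lt_0_compat; [apply Rmult_lt_0_compat; lra| lra]).
    assert (hY : 2 * L * T / mu 0%nat <= Y) by (unfold Y; lra).
    assert (X / Y <= L / Y) by (unfold Rdiv; apply Rmult_le_compat_r; [left; apply Rinv_0_lt_compat; lra| unfold X; pose proof (sumR_nonneg mu (S K) (fun i _ => Rlt_le _ _ (H4 i))); lra]).
    assert (L / Y <= L / (2 * L * T / mu 0%nat)) by (unfold Rdiv; apply Rmult_le_compat_l; [lra| apply Rinv_le_contravar; lra]).
    replace (mu 0%nat / (2 * T)) with (L / (2 * L * T / mu 0%nat)) by (field; lra).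
    lra. }
  assert (hlow : mu 0%nat / T <= sumR term N0).
  { replace N0 with (1 + (N0 - 1))%nat by lia. rewrite sumR_split.
    assert (0 <= sumR (fun i0 => term (1 + i0)%nat) (N0 - 1)).
    { apply sumR_nonneg. intros j hj. unfold term.
      pose proof (tt_le (1 + j) n ltac:(unfold n; lia)). pose proof (H4 (1 + j)%nat).
      left; apply Rdiv_lt_0_compat; lra. }
    assert (mu 0%nat / T <= term 0%nat).
    { unfold term; rewrite H2 Rminus_0_r. unfold Rdiv; apply Rmult_le_compat_l; [lra|].
      apply Rinv_le_contravar; lra. }
    simpl. lra. }
  assert (hneg : lam + sumR (fun j => c j / (ss n - a j)) (S m) <= 0).
  { unfold lam. replace (mu 0%nat / (2 * T)) with (mu 0%nat / T - mu 0%nat / (2 * T)) by (field; lra).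
    lra. }
  assert (r i <= ss n) by (apply hmin; [rewrite hai; lra| rewrite haSi; lra| exact hneg]).
  rewrite haSi. lra. }
assert (hcsum : sumR c (S m) <= eta).
{ assert (e : sumR mu (S K) = sumR mu N0 + sumR c (S m)).
  { replace (S K) with (N0 + S m)%nat by (unfold m; lia). rewrite sumR_split. reflexivity. }
  pose proof (mu_partial_le (S K)). lra. }
assert (hup : sumR (fun k => a (S k) - r k) m <= 2 * eta * T / mu 0%nat).
{ eapply Rle_trans; [exact hsum|].
  replace (2 * eta * T / mu 0%nat) with (eta / lam) by (unfold lam; field; lra).
  unfold Rdiv; apply Rmult_le_compat_r; [left; apply Rinv_0_lt_compat; lra| lra]. }
set f := fun k => a (S k) - r k.
assert (hfpos : forall k, (k < m)%nat -> 0 <= f k).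
{ intros k hk; destruct (hr k hk) as [[h1 h2] _]. unfold f; lra. }
assert (hsub : sumR (fun i' => f (N - N0 + i')%nat) N <= sumR f m).
{ replace m with ((N - N0) + (N + (m - (N - N0) - N)))%nat by lia.
  rewrite sumR_split sumR_split.
  assert (0 <= sumR f (N - N0)) by (apply sumR_nonneg; intros; apply hfpos; lia).
  assert (0 <= sumR (fun i => f (N - N0 + (N + i))%nat) (m - (N - N0) - N)).
  { apply sumR_nonneg; intros; apply hfpos; lia. }
  assert (e : sumR (fun i => f (N - N0 + i)%nat) N = sumR (fun i' => f (N - N0 + i')%nat) N) by reflexivity.
  assert (e2 : sumR (fun i => f (N - N0 + (N + i))%nat) (m - (N - N0) - N) =
               sumR (fun i => (fun i1 => f (N - N0 + i1)%nat) (N + i)%nat) (m - (N - N0) - N)) by reflexivity.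
  lra. }
assert (hind : sumR (fun i' => ind (N + i')%nat * (delta * II N / Kc)) N <= sumR (fun i' => f (N - N0 + i')%nat) N).
{ apply sumR_le. intros i' hi'.
  destruct (ind_01 (N + i')) as [-> | [-> hb]].
  - rewrite Rmult_0_l. apply hfpos; lia.
  - rewrite Rmult_1_l. eapply Rle_trans; [|apply hkey; exact hi'].
    unfold bad in hb.
    destruct (H8 N (N + i') ltac:(lia) ltac:(lia)) as [_ h].
    pose proof Kc_ge1. pose proof (II_pos N).
    assert (II N / Kc <= II (N + i')).
    { apply (Rmult_le_reg_l Kc); [lra|]. field_simplify; [lra|lra]. }
    assert (delta * (II N / Kc) <= delta * II (N + i')) by (apply Rmult_le_compat_l; lra).
    replace (delta * II N / Kc) with (delta * (II N / Kc)) by (field; lra). lra. }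
rewrite -(sumR_scal_r (fun i => ind (N + i)%nat)).
unfold f in hsub, hind. cbv beta in hsub, hind. lra.
Qed.


Lemma Cst_pos : 0 < Cst.
Proof.
unfold Cst. pose proof Kc_ge1.
assert (0 <= INR a0 * Kc ^ a0 / (rho - 1)).
{ unfold Rdiv; apply Rmult_le_pos; [apply Rmult_le_pos; [apply pos_INR| apply pow_le; lra]|].
  left; apply Rinv_0_lt_compat; lra. }
lra.
Qed.

Definition cnt lo len := sumR (fun i => ind (lo + i)%nat) len.

Lemma cnt_split lo a b : cnt lo (a + b) = cnt lo a + cnt (lo + a) b.
Proof.
unfold cnt; rewrite sumR_split; f_equal.
apply sumR_ext; intros i _; rewrite addnA; reflexivity.
Qed.

Lemma cnt_mono lo a b : (a <= b)%nat -> cnt lo a <= cnt lo b.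
Proof. intros h; unfold cnt; apply sumR_mono; auto; intros; apply ind_nonneg. Qed.

Lemma cnt_le_len lo len : cnt lo len <= INR len.
Proof.
unfold cnt; induction len as [|n IH]; [simpl; lra|].
rewrite sumR_S S_INR. destruct (ind_01 (lo + n)) as [->| [-> _]]; lra.
Qed.

Lemma block_count N0 eta N : (1 <= N0)%nat -> (N0 <= N)%nat -> L - sumR mu N0 <= eta -> 0 <= eta ->
  cnt N N <= 2 * eta * Cst * Kc / (mu 0%nat * delta) * INR N.
Proof.
intros h1 h2 h3 h4.
pose proof (block N0 eta N h1 h2 h3) as hb. fold (cnt N N) in hb.
pose proof (tt_bound N) as htb. pose proof Kc_ge1. pose proof (II_pos N). pose proof (H4 0).
assert (hN : 0 < INR N) by (apply lt_0_INR; lia).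
assert (2 * eta * tt (2 * N) / mu 0%nat <= 2 * eta * (Cst * INR N * II N) / mu 0%nat).
{ unfold Rdiv; apply Rmult_le_compat_r; [left; apply Rinv_0_lt_compat; lra|].
  apply Rmult_le_compat_l; lra. }
assert (hpos : 0 < delta * II N / Kc) by (apply Rdiv_lt_0_compat; [apply Rmult_lt_0_compat|]; lra).
apply (Rmult_le_reg_r (delta * II N / Kc)); [exact hpos|].
replace (2 * eta * Cst * Kc / (mu 0%nat * delta) * INR N * (delta * II N / Kc))
  with (2 * eta * (Cst * INR N * II N) / mu 0%nat) by (field; repeat split; lra).
lra.
Qed.

Lemma half_exists R : exists q, (2 * q <= R)%nat /\ (R <= 2 * q + 1)%nat.
Proof.
induction R as [|R [q [hq1 hq2]]]; [exists 0%nat; lia|].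
destruct (leqP (R.+1) (2 * q + 1)) as [h|h]; [exists q; lia| exists (S q); lia].
Qed.

Lemma dyadic N0 eta : (1 <= N0)%nat -> L - sumR mu N0 <= eta -> 0 <= eta ->
  forall R, (N0 <= R)%nat -> cnt N0 (S R - N0) <= 2 * (2 * eta * Cst * Kc / (mu 0%nat * delta)) * INR R.
Proof.
intros h1 h2 h3.
set Dn := 2 * eta * Cst * Kc / (mu 0%nat * delta).
assert (hD : 0 <= Dn).
{ unfold Dn. pose proof Cst_pos; pose proof Kc_ge1; pose proof (H4 0).
  unfold Rdiv; apply Rmult_le_pos; [| left; apply Rinv_0_lt_compat; apply Rmult_lt_0_compat; lra].
  apply Rmult_le_pos; [|lra]. apply Rmult_le_pos; [|lra]. lra. }
assert (main : forall B R, (R <= B)%nat -> (N0 <= R)%nat -> cnt N0 (S R - N0) <= 2 * Dn * INR R).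
{ induction B as [|B IH]; intros R hRB hR.
  - lia.
  - destruct (leqP (2 * N0) R) as [hbig|hsmall].
    + destruct (half_exists R) as [q [hq1 hq2]].
      assert (hqN0 : (N0 <= q)%nat) by lia.
      replace (S R - N0)%nat with ((S q - N0) + (R - q))%nat by lia.
      rewrite cnt_split.
      replace (N0 + (S q - N0))%nat with (S q) by lia.
      assert (hA : cnt N0 (S q - N0) <= 2 * Dn * INR q) by (apply IH; lia).
      assert (hB : cnt (S q) (R - q) <= Dn * INR (S q)).
      { eapply Rle_trans; [apply cnt_mono with (b := S q); lia|].
        apply (block_count N0 eta); auto; lia. }
      assert (hq : 3 * INR q + 1 <= 2 * INR R).
      { assert (INR (2 * q) <= INR R) by (apply le_INR; lia).
        rewrite INR_muln in H. simpl in H.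
        assert (1 <= INR q) by (apply (le_INR 1); lia). lra. }
      rewrite S_INR in hB.
      assert (Dn * (3 * INR q + 1) <= Dn * (2 * INR R)) by (apply Rmult_le_compat_l; lra).
      lra.
    + eapply Rle_trans; [apply cnt_mono with (b := N0); lia|].
      eapply Rle_trans; [apply (block_count N0 eta N0); auto; lia|].
      assert (INR N0 <= INR R) by (apply le_INR; lia).
      assert (0 <= INR N0) by apply pos_INR.
      assert (Dn * INR N0 <= Dn * INR R) by (apply Rmult_le_compat_l; lra).
      assert (0 <= Dn * INR R) by (apply Rmult_le_pos; lra).
      fold Dn. lra. }
intros R hR; apply (main R); lia.
Qed.

Lemma core_density : forall eps, 0 < eps -> exists R0, forall R : nat, R0 <= INR R -> cnt 0 (S R) <= eps * INR R.
Proof.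
intros eps heps.
pose proof Cst_pos. pose proof Kc_ge1. pose proof (H4 0).
set eta := eps * mu 0%nat * delta / (8 * Cst * Kc).
assert (heta : 0 < eta).
{ unfold eta; apply Rdiv_lt_0_compat; [repeat apply Rmult_lt_0_compat; lra| repeat apply Rmult_lt_0_compat; lra]. }
destruct (H5 eta heta) as [N HN].
set N0 := S N.
assert (htail : L - sumR mu N0 <= eta).
{ specialize (HN N (le_n N)). unfold R_dist in HN. unfold N0; rewrite sumR_f_R0.
  apply Rabs_def2 in HN. lra. }
assert (hDn : 2 * (2 * eta * Cst * Kc / (mu 0%nat * delta)) = eps / 2).
{ unfold eta; field; repeat split; lra. }
exists (Rmax (INR N0) (2 * INR N0 / eps)).
intros R hR.
assert (h1 : INR N0 <= INR R) by (eapply Rle_trans; [apply Rmax_l| exact hR]).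
assert (h2 : 2 * INR N0 / eps <= INR R) by (eapply Rle_trans; [apply Rmax_r| exact hR]).
assert (hNR : (N0 <= R)%nat) by (apply/ssrnat.leP; apply INR_le; exact h1).
replace (S R) with (N0 + (S R - N0))%nat by lia.
rewrite cnt_split. rewrite add0n.
assert (hA : cnt 0 N0 <= INR N0).
by apply cnt_le_len.
pose proof (dyadic N0 eta ltac:(unfold N0; lia) htail (Rlt_le _ _ heta) R hNR) as hB.
rewrite hDn in hB.
assert (INR N0 <= eps / 2 * INR R).
{ apply (Rmult_le_reg_l (2 / eps)); [apply Rdiv_lt_0_compat; lra|].
  replace (2 / eps * (eps / 2 * INR R)) with (INR R) by (field; lra).
  replace (2 / eps * INR N0) with (2 * INR N0 / eps) by (field; lra). exact h2. }
lra.
Qed.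
End Core.


Lemma NoDup_map_on {A B : Type} (g : A -> B) (l : list A) :
  NoDup l -> (forall x y, In x l -> In y l -> g x = g y -> x = y) -> NoDup (map g l).
Proof.
induction l as [|x l IH]; intros hnd hinj; simpl; [constructor|].
inversion hnd as [|? ? hx hl]; subst.
constructor.
- intros hin. apply in_map_iff in hin as [y [hy hyl]].
  assert (y = x) by (apply hinj; simpl; auto). subst; contradiction.
- apply IH; auto. intros; apply hinj; simpl; auto.
Qed.

Definition indP (P : nat -> Prop) (k : nat) : R :=
  if excluded_middle_informative (P k) then 1 else 0.
Definition indbP (P : nat -> Prop) (k : nat) : bool :=
  if excluded_middle_informative (P k) then true else false.

Lemma filter_count (P : nat -> Prop) n :
  INR (length (filter (indbP P) (seq 0 n))) = sumR (indP P) n.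
Proof.
induction n as [|n IH]; [reflexivity|].
rewrite seq_S filter_app length_app plus_INR IH sumR_S.
unfold indbP, indP; simpl.
destruct (excluded_middle_informative (P n)); simpl; lra.
Qed.

Lemma density_from_count (P : Z -> Prop) (g : Z -> nat) (badk : nat -> Prop) :
  (forall n, P n -> badk (g n) /\ INR (g n) <= Rabs (IZR n)) ->
  (forall n m, P n -> P m -> g n = g m -> n = m) ->
  (forall eps, 0 < eps -> exists R0, forall R : nat, R0 <= INR R -> sumR (indP badk) (S R) <= eps * INR R) ->
  zero_density P.
Proof.
intros hP hinj hcore eps heps.
destruct (hcore (eps / 2) ltac:(lra)) as [R0 hR0].
exists (Rmax R0 1). intros Rr l hRr hnd hl.
assert (h1 : R0 <= Rr) by (eapply Rle_trans; [apply Rmax_l| exact hRr]).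
assert (h2 : 1 <= Rr) by (eapply Rle_trans; [apply Rmax_r| exact hRr]).
destruct (archimed Rr) as [hu1 hu2].
assert (hupos : (0 <= up Rr)%Z) by (apply le_IZR; lra).
set R := Z.to_nat (up Rr).
assert (hINR : INR R = IZR (up Rr)) by (unfold R; rewrite INR_IZR_INZ Z2Nat.id; auto).
assert (hlen : (length l <= length (filter (indbP badk) (seq 0 (S R))))%coq_nat).
{ rewrite <- (length_map g l). apply NoDup_incl_length.
  - apply NoDup_map_on; auto. intros x y hx hy; apply hinj; apply hl; auto.
  - intros k hk. apply in_map_iff in hk as [n [<- hn]].
    destruct (hl n hn) as [hPn hn2]. destruct (hP n hPn) as [hb hk].
    apply filter_In; split.
    + apply in_seq. split; [lia|].
      assert (INR (g n) < INR R) by lra.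
      apply INR_lt in H. lia.
    + unfold indbP. destruct (excluded_middle_informative (badk (g n))); auto. }
apply le_INR in hlen. rewrite filter_count in hlen.
assert (sumR (indP badk) (S R) <= eps / 2 * INR R) by (apply hR0; lra).
assert (eps / 2 * INR R <= eps / 2 * (Rr + 1)) by (apply Rmult_le_compat_l; lra).
assert (eps / 2 * 1 <= eps / 2 * Rr) by (apply Rmult_le_compat_l; lra).
lra.
Qed.

Lemma core_to_dens (tt ss mu : nat -> R) L Kc rho a0 delta (P : Z -> Prop) (g : Z -> nat) :
  (forall n : nat, tt n < tt n.+1) -> tt 0%nat = 0 ->
  (forall M : R, exists n : nat, M < tt n) -> (forall k : nat, 0 < mu k) ->
  infinite_sum mu L ->
  (forall n : nat, exists l : R, infinite_sum (fun k : nat => mu k / (ss n - tt k)) l /\ l <= 0) ->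
  (forall n : nat, tt n < ss n < tt n.+1) ->
  (forall n k : nat, (n <= k)%nat -> (k <= 2 * n)%nat -> II tt k <= Kc * II tt n /\ II tt n <= Kc * II tt k) ->
  (1 < a0)%nat -> 1 < rho -> (forall n : nat, rho * tt n <= tt (a0 * n)%nat) ->
  0 < delta ->
  (forall n, P n -> bad tt ss delta (g n) /\ INR (g n) <= Rabs (IZR n)) ->
  (forall n m, P n -> P m -> g n = g m -> n = m) ->
  zero_density P.
Proof.
intros h1 h2 h3 h4 h5 h6 h7 h8 h9 h10 h11 hd hP hinj.
apply (density_from_count P g (bad tt ss delta) hP hinj).
intros eps heps.
destruct (core_density tt ss mu h1 h2 h3 h4 L h5 h6 h7 Kc rho a0 h8 h9 h10 h11 delta hd eps heps) as [R0 hR0].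
exists R0; intros R hR.
specialize (hR0 R hR). unfold cnt in hR0.
replace (sumR (indP (bad tt ss delta)) R.+1) with (sumR (fun i : nat => ind tt ss delta (0 + i)) R.+1); [exact hR0|].
apply sumR_ext; intros i _; rewrite add0n; reflexivity.
Qed.

Lemma inf_sum_ext f g l : (forall n, f n = g n) -> infinite_sum f l -> infinite_sum g l.
Proof. intros h; replace g with f; [auto| apply functional_extensionality; auto]. Qed.

Lemma sum_opp f n : sum_f_R0 (fun k => - f k) n = - sum_f_R0 f n.
Proof. induction n; simpl; [lra| rewrite IHn; lra]. Qed.

Lemma inf_sum_opp f l : infinite_sum f l -> infinite_sum (fun n => - f n) (- l).
Proof.
intros h eps heps. destruct (h eps heps) as [N hN]. exists N. intros n hn.
unfold R_dist in *. rewrite sum_opp.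
replace (- sum_f_R0 f n - - l) with (- (sum_f_R0 f n - l)) by ring.
rewrite Rabs_Ropp; auto.
Qed.

Lemma inf_sum_cons f l x : infinite_sum f l ->
  infinite_sum (fun n => match n with O => x | S j => f j end) (x + l).
Proof.
intros h eps heps. destruct (h eps heps) as [N hN]. exists (S N). intros n hn.
destruct n as [|n]; [lia|].
assert (e : sum_f_R0 (fun n => match n with O => x | S j => f j end) (S n) = x + sum_f_R0 f n)
  by (rewrite decomp_sum; [reflexivity| lia]).
rewrite e. unfold R_dist in *.
replace (x + sum_f_R0 f n - (x + l)) with (sum_f_R0 f n - l) by ring.
apply hN; lia.
Qed.

Lemma inf_sum_nonneg f l : (forall n, 0 <= f n) -> infinite_sum f l -> 0 <= l.
Proof.
intros hf h. apply (inf_sum_ge f l 0 0 h). intros; apply sumR_nonneg; auto.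
Qed.

Lemma re_div (m x y : R) : x <> y -> Cre (Cdiv (RtoC m) (Csub (RtoC x) (RtoC y))) = m / (x - y).
Proof.
intros h. unfold Cre, Cdiv, Cmul, Cinv, Csub, RtoC; simpl.
assert (H : x - y <> 0) by lra.
assert (H2 : (x - y) * (x - y) + (0 - 0) * (0 - 0) <> 0).
{ replace ((x - y) * (x - y) + (0 - 0) * (0 - 0)) with ((x - y) * (x - y)) by ring.
  apply Rmult_integral_contrapositive; split; exact H. }
field; tauto.
Qed.

Theorem corollary5p4
  (t : Z -> R) (mu : Z -> R) (A B : Cx -> Cx) (s : Z -> R)
  (Ht_incr : forall n : Z, t n < t (n + 1)%Z)
  (Ht_pinf : forall M : R, exists N : Z, forall n : Z, (N <= n)%Z -> M < t n)
  (Ht_minf : forall M : R, exists N : Z, forall n : Z, (n <= N)%Z -> t n < M)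
  (Hmu_pos : forall n : Z, 0 < mu n)
  (Hmu_sum : exists L : R, Zseries mu L)
  (HA_entire : entire A)
  (HA_real : forall x : R, Cim (A (RtoC x)) = 0)
  (HA_zeros : forall z : Cx, A z = C0 <-> exists n : Z, z = RtoC (t n))
  (HA_simple : forall z l : Cx, A z = C0 -> has_Cderiv A z l -> l <> C0)
  (HB_entire : entire B)
  (HB_def : forall z : Cx, (forall n : Z, z <> RtoC (t n)) ->
     exists S : Cx,
       Zseries_C (fun n => Cdiv (RtoC (mu n)) (Csub z (RtoC (t n)))) S /\
       B z = Cmul (A z) S)
  (Hs_int : forall n : Z, t n < s n < t (n + 1)%Z)
  (Hs_zero : forall n : Z, B (RtoC (s n)) = C0)
  (Hasymp : exists K : R, 0 < K /\ forall n k : Z,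
     ((n <= k <= 2 * n)%Z \/ (2 * n <= k <= n)%Z) ->
     / K * (t (n + 1)%Z - t n) <= t (k + 1)%Z - t k /\
     t (k + 1)%Z - t k <= K * (t (n + 1)%Z - t n))
  (Hgrowth : exists (a : Z) (rho : R), (2 <= a)%Z /\ 1 < rho /\
     forall n : Z, rho * Rabs (t n) <= Rabs (t (a * n)%Z)) :
  forall delta : R, 0 < delta ->
    zero_density (fun n => 0 < t n /\
                   t (n + 1)%Z - s n >= delta * (t (n + 1)%Z - t n)) /\
    zero_density (fun n => t n < 0 /\
                   s n - t n >= delta * (t (n + 1)%Z - t n)).
Proof.
intros delta hdelta.
destruct Hgrowth as [a [rho [ha [hrho hg]]]].
destruct Hasymp as [K [hK hasymp]].
destruct Hmu_sum as [Lm [lp [ln [hlp [hln hL]]]]].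
assert (tlt : forall n m, (n < m)%Z -> t n < t m).
{ assert (aux : forall d n, t n < t (n + Z.of_nat (S d))%Z).
  { induction d as [|d IH]; intros n.
    - replace (n + Z.of_nat 1)%Z with (n + 1)%Z by lia. apply Ht_incr.
    - replace (n + Z.of_nat (S (S d)))%Z with ((n + Z.of_nat (S d)) + 1)%Z by lia.
      specialize (IH n). specialize (Ht_incr (n + Z.of_nat (S d))%Z). lra. }
  intros n m hnm. replace m with (n + Z.of_nat (S (Z.to_nat (m - n - 1))))%Z by lia. apply aux. }
assert (tle : forall n m, (n <= m)%Z -> t n <= t m).
{ intros n m h. destruct (Z.eq_dec n m) as [->|hne]; [lra|]. left; apply tlt; lia. }
assert (ht0 : t 0%Z = 0).
{ specialize (hg 0%Z). rewrite Z.mul_0_r in hg.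
  pose proof (Rabs_pos (t 0%Z)).
  assert (e : Rabs (t 0%Z) = 0) by nra.
  destruct (Rcase_abs (t 0%Z)) as [h|h]; [rewrite Rabs_left in e; lra| rewrite Rabs_right in e; lra]. }
assert (snt : forall n k, s n <> t k).
{ intros n k e. destruct (Z_lt_le_dec k (n + 1)) as [h|h].
  - pose proof (tle k n ltac:(lia)). destruct (Hs_int n). lra.
  - pose proof (tle (n+1)%Z k h). destruct (Hs_int n). lra. }
assert (hZ : forall n, Zseries (fun k => mu k / (s n - t k)) 0).
{ intros n.
  assert (hne : forall k, RtoC (s n) <> RtoC (t k)).
  { intros k e. injection e as e. exact (snt n k e). }
  destruct (HB_def (RtoC (s n)) hne) as [S [hS hBS]].
  rewrite Hs_zero in hBS.
  assert (hA : A (RtoC (s n)) <> C0).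
  { intros h. apply HA_zeros in h as [k hk]. exact (hne k hk). }
  assert (hAim := HA_real (s n)).
  assert (hSre : Cre S = 0).
  { destruct (A (RtoC (s n))) as [p q] eqn:eA. unfold Cim in hAim; simpl in hAim. subst q.
    assert (hp : p <> 0) by (intros ->; apply hA; reflexivity).
    destruct S as [x y]. unfold Cmul, C0 in hBS. simpl in hBS. injection hBS as e1 e2.
    unfold Cre; simpl. apply (Rmult_eq_reg_l p); [lra|exact hp]. }
  destruct hS as [hS1 _]. rewrite hSre in hS1.
  destruct hS1 as [l1 [l2 [h1 [h2 h3]]]]. exists l1, l2. split; [|split; [|exact h3]].
  - eapply inf_sum_ext; [|exact h1]. intros k. cbv beta. apply re_div. apply snt.
  - eapply inf_sum_ext; [|exact h2]. intros k. cbv beta. apply re_div. apply snt. }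
assert (tpos : forall n, 0 < t n -> (0 <= n)%Z).
{ intros n h. destruct (Z_lt_le_dec n 0) as [h'|h']; [|exact h'].
  pose proof (tle n 0%Z ltac:(lia)). lra. }
assert (tneg : forall n, t n < 0 -> (n < 0)%Z).
{ intros n h. destruct (Z_lt_le_dec n 0) as [h'|h']; [exact h'|].
  pose proof (tle 0%Z n h'). lra. }
split.
- apply (core_to_dens (fun k => t (Z.of_nat k)) (fun k => s (Z.of_nat k)) (fun k => mu (Z.of_nat k))
           lp K rho (Z.to_nat a) delta _ Z.to_nat).
  + intros k; cbv beta; rewrite Nat2Z.inj_succ; apply Ht_incr.
  + cbv beta; simpl; exact ht0.
  + intros M; destruct (Ht_pinf M) as [N hN]; exists (Z.to_nat N); cbv beta; apply hN; lia.
  + intros; apply Hmu_pos.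
  + exact hlp.
  + intros n; destruct (hZ (Z.of_nat n)) as [l1 [l2 [h1 [h2 h3]]]]; exists l1; split; [exact h1|].
    assert (0 <= l2).
    { eapply inf_sum_nonneg; [|exact h2]. intros j; cbv beta.
      apply Rlt_le, Rdiv_lt_0_compat; [apply Hmu_pos|].
      destruct (Hs_int (Z.of_nat n)). pose proof (tle 0%Z (Z.of_nat n) ltac:(lia)).
      pose proof (tlt (- Z.of_nat (S j))%Z 0%Z ltac:(lia)). lra. }
    lra.
  + intros n; cbv beta; rewrite Nat2Z.inj_succ; apply Hs_int.
  + intros n k h1 h2; unfold II; cbv beta; rewrite !Nat2Z.inj_succ; unfold Z.succ.
    assert (hnk : (Z.of_nat n <= Z.of_nat k <= 2 * Z.of_nat n)%Z) by lia.
    destruct (hasymp (Z.of_nat n) (Z.of_nat k) (or_introl hnk)) as [e1 e2].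
    split; [exact e2|].
    assert (e : t (Z.of_nat n + 1)%Z - t (Z.of_nat n) = K * (/ K * (t (Z.of_nat n + 1)%Z - t (Z.of_nat n))))
      by (field; apply Rgt_not_eq; exact hK).
    rewrite e. apply Rmult_le_compat_l; lra.
  + lia.
  + exact hrho.
  + intros n; cbv beta.
    replace (Z.of_nat (Z.to_nat a * n)) with (a * Z.of_nat n)%Z by nia.
    specialize (hg (Z.of_nat n)).
    rewrite (Rabs_pos_eq (t (Z.of_nat n))) in hg; [|rewrite <- ht0; apply tle; lia].
    rewrite (Rabs_pos_eq (t (a * Z.of_nat n)%Z)) in hg; [exact hg|rewrite <- ht0; apply tle; nia].
  + exact hdelta.
  + intros n [hpos hbad].
    assert (hn := tpos n hpos).
    split.
    * unfold bad, II; cbv beta. rewrite Nat2Z.inj_succ Z2Nat.id; [|lia]. unfold Z.succ. lra.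
    * rewrite INR_IZR_INZ Z2Nat.id; [|lia]. rewrite Rabs_pos_eq; [lra| apply IZR_le; lia].
  + intros n m [hn _] [hm _] e. apply tpos in hn. apply tpos in hm. lia.
- apply (core_to_dens (fun k => - t (- Z.of_nat k)%Z) (fun k => - s (- Z.of_nat k - 1)%Z)
           (fun k => mu (- Z.of_nat k)%Z)
           (mu 0%Z + ln) K rho (Z.to_nat a) delta _ (fun n => Z.to_nat (- n - 1))).
  + intros k; cbv beta; rewrite Nat2Z.inj_succ; unfold Z.succ.
    pose proof (Ht_incr (- Z.of_nat k - 1)%Z) as h.
    replace (- (Z.of_nat k + 1))%Z with (- Z.of_nat k - 1)%Z by lia.
    replace (- Z.of_nat k - 1 + 1)%Z with (- Z.of_nat k)%Z in h by lia. lra.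
  + cbv beta; simpl; rewrite ht0; lra.
  + intros M; destruct (Ht_minf (- M)) as [N hN]; exists (Z.to_nat (- N)); cbv beta.
    specialize (hN (- Z.of_nat (Z.to_nat (- N)))%Z ltac:(lia)). lra.
  + intros; apply Hmu_pos.
  + eapply inf_sum_ext; [|apply (inf_sum_cons _ ln (mu 0%Z) hln)].
    intros [|j]; reflexivity.
  + intros m. set n := (- Z.of_nat m - 1)%Z.
    destruct (hZ n) as [l1 [l2 [h1 [h2 h3]]]].
    exists (- (mu 0%Z / (s n - t 0%Z) + l2)). split.
    * eapply inf_sum_ext; [|apply inf_sum_opp, (inf_sum_cons _ l2 (mu 0%Z / (s n - t 0%Z)) h2)].
      intros [|j]; cbv beta.
      -- simpl (- Z.of_nat 0)%Z. fold n. pose proof (snt n 0%Z).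
         field. split; intro e; apply H; lra.
      -- fold n. pose proof (snt n (- Z.of_nat (S j))%Z).
         field. split; intro e; apply H; lra.
    * assert (hl1 : l1 <= mu 0%Z / (s n - t 0%Z)).
      { apply (inf_sum_le _ l1 _ 1 h1). intros N hN.
        replace N with (1 + (N - 1))%nat by lia. rewrite sumR_split.
        assert (sumR (fun i => mu (Z.of_nat (1 + i)) / (s n - t (Z.of_nat (1 + i)))) (N - 1) <= 0).
        { assert (e : sumR (fun _ => 0) (N - 1) = 0).
          { apply sumR_const0. }
          rewrite <- e. apply sumR_le. intros i _.
          destruct (Hs_int n) as [_ hsn].
          pose proof (tle (n + 1)%Z 0%Z ltac:(unfold n; lia)).
          pose proof (tlt 0%Z (Z.of_nat (1 + i)) ltac:(lia)).
          pose proof (Hmu_pos (Z.of_nat (1 + i))).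
          assert (s n - t (Z.of_nat (1 + i)) < 0) by lra.
          unfold Rdiv. apply Rlt_le. apply Rmult_pos_neg; [lra| apply Rinv_lt_0_compat; lra]. }
        assert (e1 : sumR (fun k => mu (Z.of_nat k) / (s n - t (Z.of_nat k))) 1 = mu 0%Z / (s n - t 0%Z))
          by (simpl; lra).
        cbv beta. rewrite e1. lra. }
      lra.
  + intros m; cbv beta; rewrite Nat2Z.inj_succ; unfold Z.succ.
    destruct (Hs_int (- Z.of_nat m - 1)%Z) as [e1 e2].
    replace (- Z.of_nat m - 1 + 1)%Z with (- Z.of_nat m)%Z in e2 by lia.
    replace (- (Z.of_nat m + 1))%Z with (- Z.of_nat m - 1)%Z by lia. lra.
  + intros n k h1 h2; unfold II; cbv beta; rewrite !Nat2Z.inj_succ; unfold Z.succ.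
    assert (hnk : (2 * (- Z.of_nat n - 1) <= - Z.of_nat k - 1 <= - Z.of_nat n - 1)%Z) by lia.
    destruct (hasymp _ _ (or_intror hnk)) as [e1 e2].
    replace (- Z.of_nat k - 1 + 1)%Z with (- Z.of_nat k)%Z in e1, e2 by lia.
    replace (- Z.of_nat n - 1 + 1)%Z with (- Z.of_nat n)%Z in e1, e2 by lia.
    replace (- (Z.of_nat k + 1))%Z with (- Z.of_nat k - 1)%Z by lia.
    replace (- (Z.of_nat n + 1))%Z with (- Z.of_nat n - 1)%Z by lia.
    split; [lra|].
    assert (e : t (- Z.of_nat n)%Z - t (- Z.of_nat n - 1)%Z = K * (/ K * (t (- Z.of_nat n)%Z - t (- Z.of_nat n - 1)%Z)))
      by (field; apply Rgt_not_eq; exact hK).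
    assert (K * (/ K * (t (- Z.of_nat n)%Z - t (- Z.of_nat n - 1)%Z)) <= K * (t (- Z.of_nat k)%Z - t (- Z.of_nat k - 1)%Z))
      by (apply Rmult_le_compat_l; lra).
    lra.
  + lia.
  + exact hrho.
  + intros m; cbv beta.
    replace (- Z.of_nat (Z.to_nat a * m))%Z with (a * (- Z.of_nat m))%Z by nia.
    specialize (hg (- Z.of_nat m)%Z).
    rewrite (Rabs_left1 (t (- Z.of_nat m)%Z)) in hg; [|rewrite <- ht0; apply tle; lia].
    rewrite (Rabs_left1 (t (a * - Z.of_nat m)%Z)) in hg; [lra|rewrite <- ht0; apply tle; nia].
  + exact hdelta.
  + intros n [hneg hbad]. assert (hn := tneg n hneg).
    split.
    * unfold bad, II; cbv beta. rewrite Nat2Z.inj_succ Z2Nat.id; [|lia]. unfold Z.succ.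
      replace (- (- n - 1 + 1))%Z with n by lia.
      replace (- (- n - 1))%Z with (n + 1)%Z by lia.
      replace (n + 1 - 1)%Z with n by lia. lra.
    * rewrite INR_IZR_INZ Z2Nat.id; [|lia]. rewrite Rabs_left; [|apply IZR_lt; lia].
      rewrite minus_IZR opp_IZR. simpl. lra.
  + intros n m [hn _] [hm _] e. apply tneg in hn. apply tneg in hm. lia.
Qed.
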